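(* Let $L>0$ and consider the fourth-order ODE $$\tfrac12\,\theta=\theta^2\bigl(-\theta^{(4)}+\theta\bigr).$$ (i) There is no function $\theta\in C^4([-L,L])$, $\theta\not\equiv 0$, satisfying this ODE on $(-L,L)$ together with the boundary conditions $\theta(\pm L)=\theta'(\pm L)=0$. (ii) There is no function $\theta\in C^4(\mathbb{R})$, $\theta\not\equiv 0$, with $\theta,\theta',\theta'',\theta'''$ bounded on $\mathbb{R}$, satisfying this ODE on $\mathbb{R}$ together with $\theta(x)\to0$ as $x\to\pm\infty$.
   Context: This ODE is the profile equation for separable blow-up solutions $u(x,t)=(T-t)^{-1/2}\theta(x)$ of $u_t=u^2(-u_{xxxx}+u)$. For a solution that does not vanish, dividing by $\theta^2$, multiplying by $\theta'$ and integrating gives the first integral $\tfrac12\ln|\theta|=-\theta'''\theta+\tfrac12(\theta'')^2+\tfrac12\theta^2+C$ with a constant $C\in\mathbb{R}$. *)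

(* Defs.v *)
From Stdlib Require Import Reals.
Open Scope R_scope.

Definition continuous_on_closed (f : R -> R) (a b : R) : Prop :=
  forall x, a <= x <= b -> limit1_in f (fun y => a <= y <= b) (f x) x.

Definition C4_closed (L : R) (th th1 th2 th3 th4 : R -> R) : Prop :=
  (forall x, -L < x < L ->
     derivable_pt_lim th x (th1 x) /\ derivable_pt_lim th1 x (th2 x) /\
     derivable_pt_lim th2 x (th3 x) /\ derivable_pt_lim th3 x (th4 x)) /\
  continuous_on_closed th (-L) L /\ continuous_on_closed th1 (-L) L /\
  continuous_on_closed th2 (-L) L /\ continuous_on_closed th3 (-L) L /\
  continuous_on_closed th4 (-L) L.

Definition C4_R (th th1 th2 th3 th4 : R -> R) : Prop :=
  (forall x,
     derivable_pt_lim th x (th1 x) /\ derivable_pt_lim th1 x (th2 x) /\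
     derivable_pt_lim th2 x (th3 x) /\ derivable_pt_lim th3 x (th4 x)) /\
  continuity th4.

Definition bounded_R (f : R -> R) : Prop := exists M, forall x, Rabs (f x) <= M.

Definition tends_to_0_at_pinf (f : R -> R) : Prop :=
  forall eps, eps > 0 -> exists M, forall x, x > M -> Rabs (f x) < eps.
Definition tends_to_0_at_minf (f : R -> R) : Prop :=
  forall eps, eps > 0 -> exists M, forall x, x < M -> Rabs (f x) < eps.

Definition profile_ode (th th4 : R -> R) (x : R) : Prop :=
  / 2 * th x = (th x) ^ 2 * (- th4 x + th x).

(* Main.v *)
Require Import Defs.
From Stdlib Require Import Reals Lra Psatz Classical.
Open Scope R_scope.

Definition clamp (L x : R) := Rmax (-L) (Rmin L x).

Lemma clamp_in L x : 0 < L -> -L <= clamp L x <= L.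
Proof. intros; unfold clamp, Rmax, Rmin; repeat destruct Rle_dec; lra. Qed.

Lemma clamp_id L x : -L <= x <= L -> clamp L x = x.
Proof. intros; unfold clamp, Rmax, Rmin; repeat destruct Rle_dec; lra. Qed.

Lemma clamp_lip L x y : 0 < L -> Rabs (clamp L x - clamp L y) <= Rabs (x - y).
Proof.
  intros; unfold clamp, Rmax, Rmin; repeat destruct Rle_dec;
  unfold Rabs; repeat destruct Rcase_abs; lra.
Qed.

Lemma cont_clamp L f : 0 < L -> continuous_on_closed f (-L) L ->
  continuity (fun x => f (clamp L x)).
Proof.
  intros HL H c. unfold continuity_pt, continue_in, limit1_in, limit_in.
  intros eps He.
  destruct (H (clamp L c) (clamp_in L c HL) eps He) as [alp [Ha Hx]].
  exists alp. split; auto. intros x [_ Hd]. simpl in *. unfold R_dist in *.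
  apply Hx. split. apply clamp_in; auto.
  simpl; unfold R_dist. eapply Rle_lt_trans; [apply clamp_lip; auto | exact Hd].
Qed.

Lemma abs_bound (g : R -> R) a b : a <= b ->
  (forall c, a <= c <= b -> continuity_pt g c) ->
  exists M, forall x, a <= x <= b -> Rabs (g x) <= M.
Proof.
  intros Hab Hc.
  destruct (continuity_ab_maj (fun x => Rabs (g x)) a b Hab) as [Mx [HM _]].
  - intros c Hc'. apply (continuity_pt_comp g Rabs c); [apply Hc; auto | apply Rcontinuity_abs].
  - exists (Rabs (g Mx)). intros; apply HM; auto.
Qed.

Lemma key (f g : R -> R) a b M : a < b -> continuity f ->
  (forall x, a <= x <= b -> Rabs (g x) <= M) ->
  (forall x, a <= x <= b -> f x <> 0 -> / 2 * f x = f x ^ 2 * (- g x + f x)) ->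
  ((f a = 0 /\ f b <> 0) \/ (f a <> 0 /\ f b = 0)) -> False.
Proof.
  intros Hab Hf HM Hode Hend.
  assert (Hv : exists v, v <> 0 /\ forall y, (f a - y) * (f b - y) = (v - y) * (- y)).
  { destruct Hend as [[H1 H2]|[H1 H2]]; [exists (f b)|exists (f a)]; split; auto;
    intros; rewrite ?H1, ?H2; ring. }
  destruct Hv as [v [Hv0 Hvy]].
  set (r := Rmin (Rabs v) (/ (4 * (Rabs M + 1)))).
  assert (HMp : 0 < 4 * (Rabs M + 1)) by (pose proof (Rabs_pos M); lra).
  assert (Hr0 : 0 < r).
  { unfold r, Rmin; destruct Rle_dec. apply Rabs_pos_lt; auto. apply Rinv_0_lt_compat; auto. }
  assert (Hr1 : r <= Rabs v) by (unfold r; apply Rmin_l).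
  assert (Hr2 : r * (4 * (Rabs M + 1)) <= 1).
  { assert (r <= / (4 * (Rabs M + 1))) by (unfold r; apply Rmin_r).
    apply Rmult_le_compat_r with (r := 4 * (Rabs M + 1)) in H; [|lra].
    rewrite Rinv_l in H; lra. }
  assert (Hy : exists y, Rabs y = r /\ y <> 0 /\ (v - y) * (- y) <= 0).
  { destruct (Rlt_dec 0 v).
    - exists r. rewrite Rabs_right by lra. rewrite Rabs_right in Hr1 by lra.
      repeat split; try lra. nra.
    - exists (- r). rewrite Rabs_left by lra. rewrite Rabs_left in Hr1 by lra.
      repeat split; try lra. nra. }
  destruct Hy as [y [Hya [Hy0 Hyp]]].
  destruct (IVT_cor (fun x => f x - y) a b) as [z [Hz Hfz]].
  - intro x. apply continuity_pt_minus; [apply Hf | apply continuity_pt_const; intros ? ?; auto].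
  - lra.
  - rewrite Hvy; auto.
  - assert (Hfz' : f z = y) by lra.
    pose proof (Hode z Hz) as Ho. rewrite Hfz' in Ho. specialize (Ho Hy0).
    pose proof (HM z Hz) as Hg.
    assert (Hgy : g z * y = y ^ 2 - / 2).
    { apply Rmult_eq_reg_l with (r := y); auto.
      replace (y * (g z * y)) with (y ^ 2 * g z) by ring.
      replace (y * (y ^ 2 - / 2)) with (y ^ 2 * y - / 2 * y) by ring.
      rewrite Ho. ring. }
    assert (Habs : Rabs (g z) * r = Rabs (y ^ 2 - / 2)).
    { rewrite <- Hya, <- Rabs_mult, Hgy; auto. }
    assert (Hy2 : y ^ 2 = r ^ 2).
    { rewrite <- Hya. simpl. rewrite !Rmult_1_r. rewrite <- Rabs_mult. unfold Rabs; destruct Rcase_abs; nra. }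
    rewrite Hy2 in Habs.
    assert (r <= 1/4).
    { pose proof (Rabs_pos M). nra. }
    assert (Hrr : r ^ 2 - / 2 < 0) by (simpl; nra).
    rewrite (Rabs_left _ Hrr) in Habs.
    pose proof (Rabs_pos M). pose proof (Rabs_pos (g z)).
    assert (Rabs (g z) <= Rabs M) by (pose proof (Rle_abs M); lra).
    nra.
Qed.

Theorem proposition2p1 (L : R) (HL : 0 < L) :
  (~ exists th th1 th2 th3 th4 : R -> R,
       C4_closed L th th1 th2 th3 th4 /\
       (exists x, -L <= x <= L /\ th x <> 0) /\
       (forall x, -L < x < L -> profile_ode th th4 x) /\
       th (-L) = 0 /\ th L = 0 /\ th1 (-L) = 0 /\ th1 L = 0)
  /\
  (~ exists th th1 th2 th3 th4 : R -> R,
       C4_R th th1 th2 th3 th4 /\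
       (exists x, th x <> 0) /\
       bounded_R th /\ bounded_R th1 /\ bounded_R th2 /\ bounded_R th3 /\
       (forall x, profile_ode th th4 x) /\
       tends_to_0_at_pinf th /\ tends_to_0_at_minf th).
Proof.
  split.
  - intros [th [th1 [th2 [th3 [th4 [[_ [Hc0 [_ [_ [_ Hc4]]]]] [[x0 [Hx0 Hn0]] [Hode [Hm [Hp _]]]]]]]]]].
    destruct (abs_bound (fun x => th4 (clamp L x)) (-L) L) as [M HM]; [lra| |].
    { intros c _. apply cont_clamp; auto. }
    assert (Hx0L : x0 < L) by (destruct (Req_dec x0 L); [subst; contradiction|lra]).
    apply (key (fun x => th (clamp L x)) th4 x0 L M Hx0L (cont_clamp L th HL Hc0)).
    + intros x Hx. specialize (HM x ltac:(lra)). rewrite clamp_id in HM by lra. exact HM.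
    + intros x Hx Hnz. rewrite clamp_id in * by lra.
      assert (x <> L) by (intro; subst; contradiction).
      assert (x <> -L) by (intro; subst; contradiction).
      apply Hode. lra.
    + right. rewrite !clamp_id by lra. split; auto.
  - intros [th [th1 [th2 [th3 [th4 [[Hd Hc4] [[x0 Hn0] [_ [_ [_ [[B HB] [Hode [Htp _]]]]]]]]]]]]].
    assert (Hc : continuity th).
    { intro x. apply (derivable_continuous_pt th x (exist _ (th1 x) (proj1 (Hd x)))). }
    destruct (classic (exists z, th z = 0)) as [[z Hz]|Hnz].
    + destruct (Rtotal_order z x0) as [Hlt|[Heq|Hgt]].
      * destruct (abs_bound th4 z x0) as [M HM]; [lra|intros; apply Hc4|].
        apply (key th th4 z x0 M Hlt Hc HM); [intros; apply Hode|left; auto].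
      * subst; contradiction.
      * destruct (abs_bound th4 x0 z) as [M HM]; [lra|intros; apply Hc4|].
        apply (key th th4 x0 z M Hgt Hc HM); [intros; apply Hode|right; auto].
    + assert (Hall : forall x, th x <> 0) by (intros x Hx; apply Hnz; exists x; auto).
      assert (Hsg : forall x, th x * th x0 > 0).
      { intro x. apply Rnot_le_gt. intro Hle.
        destruct (Rle_dec x x0).
        - destruct (IVT_cor th x x0 Hc r Hle) as [z [_ Hz]]. apply (Hall z Hz).
        - destruct (IVT_cor th x0 x Hc ltac:(lra) ltac:(rewrite Rmult_comm; auto)) as [z [_ Hz]].
          apply (Hall z Hz). }
      destruct (Htp (/2) ltac:(lra)) as [A HA].
      assert (HB0 : 0 <= B) by (pose proof (HB 0); pose proof (Rabs_pos (th3 0)); lra).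
      destruct (MVT_cor2 th3 th4 (A + 1) (A + 1 + 4 * B + 2) ltac:(lra)) as [c [Hmvt Hcin]].
      { intros c _. apply Hd. }
      pose proof (HB (A + 1)) as HB1. pose proof (HB (A + 1 + 4 * B + 2)) as HB2.
      pose proof (Rle_abs (th3 (A+1))). pose proof (Rle_abs (- th3 (A+1))). pose proof (Rle_abs (th3 (A + 1 + 4 * B + 2))). pose proof (Rle_abs (- th3 (A + 1 + 4 * B + 2))). rewrite Rabs_Ropp in *.
      specialize (HA c ltac:(lra)). apply Rabs_def2 in HA.
      pose proof (Hode c) as Ho. unfold profile_ode in Ho.
      pose proof (Hsg c) as Hs. pose proof (Hall c) as Hc0.
      assert (Hgy : th4 c * th c = th c ^ 2 - / 2).
      { apply Rmult_eq_reg_l with (r := th c); auto.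
        replace (th c * (th4 c * th c)) with (th c ^ 2 * th4 c) by ring.
        replace (th c * (th c ^ 2 - / 2)) with (th c ^ 2 * th c - / 2 * th c) by ring.
        rewrite Ho. ring. }
      replace (A + 1 + 4 * B + 2 - (A + 1)) with (4 * B + 2) in Hmvt by ring.
      destruct (Rlt_dec 0 (th x0)).
      * assert (0 < th c) by nra.
        assert (th4 c < - / 2) by nra.
        nra.
      * assert (th x0 < 0) by (destruct (Req_dec (th x0) 0); [contradiction|lra]).
        assert (th c < 0) by nra.
        assert (th4 c > / 2) by nra.
        nra.
Qed.
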